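(* Let $k\ge 2$ be an integer, $b(k)=\frac{k^k}{(k-1)^{k-1}}$, and \[ f_k(\beta)=\log_{b(k)}\!\left(\left(\frac{1-\beta}{k^2}+\beta\right)\left(\frac{\beta}{k^2}+1-\beta\right)^{k-1}\right)-\frac1k . \] Then $f_k(\beta)\le -1$ for all $\beta\in[0,1]$. *)

(* Defs.v *)
From Stdlib Require Import Reals.
Open Scope R_scope.

Definition bk (k : nat) : R := (INR k) ^ k / (INR k - 1) ^ (k - 1).

Definition logb (b x : R) : R := ln x / ln b.

Definition fk (k : nat) (beta : R) : R :=
  logb (bk k)
    (((1 - beta) / (INR k) ^ 2 + beta) *
     (beta / (INR k) ^ 2 + 1 - beta) ^ (k - 1))
  - 1 / INR k.

(* Main.v *)
Require Import Defs.
From Stdlib Require Import Reals Lra Lia.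
Open Scope R_scope.

Lemma ln_le_sub1 (y : R) : 0 < y -> ln y <= y - 1.
Proof. intro H. pose proof (exp_ineq1_le (ln y)). rewrite exp_ln in H0; lra. Qed.

Lemma ln_div' (x y : R) : 0 < x -> 0 < y -> ln (x / y) = ln x - ln y.
Proof. intros. unfold Rdiv. rewrite ln_mult, ln_Rinv; try lra.
  apply Rinv_0_lt_compat; lra. Qed.

Theorem lemma4p9 (k : nat) (beta : R) :
  (2 <= k)%nat -> 0 <= beta <= 1 -> fk k beta <= -1.
Proof.
  intros Hk Hb. unfold fk, logb, bk.
  assert (Hn : 2 <= INR k) by (apply (le_INR 2); lia).
  assert (Hm : INR (k - 1) = INR k - 1) by (rewrite minus_INR by lia; simpl; lra).
  set (n := INR k) in *.
  set (a := (1 - beta) / n ^ 2 + beta).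
  set (c := beta / n ^ 2 + 1 - beta).
  set (A := (1 + 1 / n ^ 2) / n).
  assert (Hn2 : 4 <= n ^ 2) by nra.
  assert (Hin : 0 < 1 / n ^ 2 <= 1/4).
  { split. apply Rdiv_lt_0_compat; lra. unfold Rdiv; rewrite !Rmult_1_l.
    apply Rinv_le_contravar; lra. }
  set (u := 1 / n ^ 2) in *.
  assert (Ha : 0 < a).
  { unfold a. replace ((1 - beta) / n ^ 2) with ((1-beta) * u) by (unfold u, Rdiv; ring). nra. }
  assert (Hc : 0 < c).
  { unfold c. replace (beta / n ^ 2) with (beta * u) by (unfold u, Rdiv; ring). nra. }
  assert (HA : 0 < A) by (unfold A; apply Rdiv_lt_0_compat; lra).
  assert (Hsum : a + c = n * A).
  { unfold a, c, A. unfold u. field. lra. }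
  assert (H1 := ln_le_sub1 (a / A) ltac:(apply Rdiv_lt_0_compat; lra)).
  assert (H2 := ln_le_sub1 (c / ((n - 1) * A)) ltac:(apply Rdiv_lt_0_compat; nra)).
  rewrite ln_div' in H1 by lra. rewrite ln_div' in H2 by nra.
  rewrite ln_mult in H2 by lra.
  assert (E : a / A + (n - 1) * (c / ((n - 1) * A)) = n).
  { replace (a / A + (n - 1) * (c / ((n - 1) * A))) with ((a + c) / A) by (field; lra).
    rewrite Hsum. field. lra. }
  assert (H3 : ln a + (n-1) * ln c - (n-1) * ln (n-1) - n * ln A <= 0).
  { assert (H2' : (n-1) * (ln c - (ln (n - 1) + ln A)) <= (n-1) * (c / ((n - 1) * A) - 1))
      by (apply Rmult_le_compat_l; lra).
    nra. }
  assert (HlA : ln A <= u - ln n).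
  { unfold A. rewrite ln_div' by lra. pose proof (ln_le_sub1 (1+u)); lra. }
  assert (Hpc : 0 < c ^ (k - 1)) by (apply pow_lt; lra).
  assert (Hpn : 0 < n ^ k) by (apply pow_lt; lra).
  assert (Hpm : 0 < (n - 1) ^ (k - 1)) by (apply pow_lt; lra).
  rewrite ln_mult by lra. rewrite ln_pow, Hm by lra.
  rewrite ln_div' by lra. rewrite !ln_pow, Hm by lra.
  fold n.
  assert (Hln1 : ln (n/(n-1)) >= 1/n).
  { pose proof (ln_le_sub1 ((n-1)/n) ltac:(apply Rdiv_lt_0_compat; lra)).
    rewrite ln_div' in H by lra. rewrite ln_div' by lra.
    replace ((n-1)/n - 1) with (-(1/n)) in H by (field; lra). lra. }
  rewrite ln_div' in Hln1 by lra.
  assert (Hl2 : ln 2 <= ln n) by (destruct (Req_dec n 2) as [->|Hne]; [lra| left; apply ln_increasing; lra]).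
  pose proof ln_lt_2.
  assert (Hinv : 1 / n <= 1/2) by (unfold Rdiv; rewrite !Rmult_1_l; apply Rinv_le_contravar; lra).
  assert (Hlb : n * ln n - (n-1) * ln (n-1) >= 1).
  { replace (n * ln n - (n-1) * ln (n-1)) with (ln n + (n-1) * (ln n - ln (n-1))) by ring.
    assert ((n-1) * (ln n - ln (n-1)) >= (n-1) * (1/n)) by (apply Rmult_ge_compat_l; lra).
    replace ((n-1)*(1/n)) with (1 - 1/n) in H0 by (field; lra). lra. }
  assert (Hu : u <= 1 / n * (1/n)) by (unfold u; right; field; lra).
  set (lb := n * ln n - (n-1) * ln (n-1)) in *.
  assert (HP : ln a + (n-1) * ln c <= 1/n - lb).
  { assert (n * ln A <= n * (u - ln n)) by (apply Rmult_le_compat_l; lra).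
    assert (n * u <= 1/n).
    { replace (1/n) with (n * (1/n * (1/n))) by (field; lra). apply Rmult_le_compat_l; lra. }
    unfold lb. nra. }
  replace (INR k) with n by reflexivity.
  apply (Rmult_le_reg_r lb); [lra|].
  unfold Rdiv at 1. rewrite Rmult_minus_distr_r, Rmult_assoc, Rinv_l by lra.
  assert (1/n * lb >= 1/n * 1) by (apply Rmult_ge_compat_l; [left; apply Rdiv_lt_0_compat; lra | lra]).
  nra.
Qed.
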